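(* Let $\epsilon>0$, $R\in\mathbb{R}$, and let $s_R\ge0$ and $m_R<\beta$ be constants such that every $\varphi\in\Theta$ with $L(\varphi)\ge R$ satisfies $|\varphi(0)|\le s_R$ and $\sup_x\varphi'(x+)\le m_R$. Suppose $\theta\in\Theta$ and $\tau\in\mathbb{R}_{\ge0}$ satisfy $DL(\theta,V_\tau)>\epsilon$ and $R\le L(\theta)$. Let $g:\mathbb{R}_{\ge0}\to[-\infty,\infty)$ be $g(t):=L(\theta+tV_\tau)-L(\theta)$. Then for $t$ in the set $\{t: g(t)\ge0\}$, the magnitude $|g''(t)|$ of the second derivative of $g$ is bounded above by a finite constant depending only on $s_R$ and $m_R$ (given the fixed density $f$ and data $x_1,\dots,x_n$).
   Context: Let $f$ be a probability density on $\mathbb{R}_{\ge0}$ satisfying the standing assumptions: (A1) $f$ is continuous and $f(x)>0$ for all $x>0$; (A2) there is $\beta\in\mathbb{R}$ such that for every $\lambda\in\mathbb{R}$, $\int_0^\infty e^{\lambda x}f(x)\,dx<\infty$ if and only if $\lambda<\beta$, and $\lim_{\lambda\to\beta^-}\int_0^\infty e^{\lambda x}f(x)\,dx=\infty$; (A3) for every $\lambda\in\mathbb{R}$, $\int_0^\infty e^{\lambda x}f(x)dx<\infty$ implies $\int_0^\infty x^2e^{\lambda x}f(x)dx<\infty$. Let $M$ be the measure on $\mathbb{R}_{\ge0}$ with density $f$. Fix data $x_1\le\dots\le x_n$ in $\mathbb{R}_{\ge0}$ with empirical distribution $\hat P=\frac1n\sum_{i=1}^n\delta_{x_i}$. $\Theta$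 is the set of convex non-decreasing functions $\theta:\mathbb{R}_{\ge0}\to\mathbb{R}$. For $\theta\in\Theta$, $L(\theta):=\int\theta\,d\hat P-\int e^{\theta}\,dM+1\in[-\infty,\infty)$. For $\theta\in\Theta$ and a function $v$, $DL(\theta,v):=\lim_{t\to0^+}\frac{L(\theta+tv)-L(\theta)}{t}$. For $\tau\ge0$, $V_\tau(x):=(x-\tau)^+$. *)

(* Defs.v *)
From mathcomp Require Import all_boot all_order all_algebra.
From mathcomp Require Import all_classical all_reals all_analysis.
Import Order.TTheory GRing.Theory Num.Theory.
Import numFieldNormedType.Exports.
Set Implicit Arguments. Unset Strict Implicit. Unset Printing Implicit Defensive.
Local Open Scope classical_set_scope.
Local Open Scope ring_scope.

(* integral of h against the measure M with density f on R_{>=0} *)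
Definition intM (R : realType) (f : R -> R) (h : R -> R) : \bar R :=
  (\int[@lebesgue_measure R]_(y in `[0%R, +oo[%classic) ((h y * f y)%:E))%E.

Definition is_density (R : realType) (f : R -> R) : Prop :=
  (forall y, 0 <= y -> 0 <= f y) /\ intM f (fun _ => 1) = 1%E.

Definition A1 (R : realType) (f : R -> R) : Prop :=
  {within `[0%R, +oo[%classic, continuous f} /\ (forall y, 0 < y -> 0 < f y).

Definition A2 (R : realType) (f : R -> R) (beta : R) : Prop :=
  (forall lam : R, (intM f (fun y => expR (lam * y)%R) < +oo)%E <-> lam < beta) /\
  ((fun lam : R => intM f (fun y => expR (lam * y)%R)) @ beta^'- --> +oo%E).

Definition A3 (R : realType) (f : R -> R) : Prop :=
  forall lam : R, (intM f (fun y => expR (lam * y)%R) < +oo)%E ->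
    (intM f (fun y => (y ^+ 2 * expR (lam * y))%R) < +oo)%E.

(* Theta: convex non-decreasing functions on R_{>=0} (values on y < 0 are irrelevant) *)
Definition inTheta (R : realType) (th : R -> R) : Prop :=
  (forall a b, 0 <= a -> a <= b -> th a <= th b) /\
  (forall a b l, 0 <= a -> 0 <= b -> 0 <= l -> l <= 1 ->
     th (l * a + (1 - l) * b) <= l * th a + (1 - l) * th b).

(* int theta dPhat, Phat = (1/n) sum delta_{x_i} *)
Definition Phat_int (R : realType) (n : nat) (x : 'I_n -> R) (th : R -> R) : R :=
  n%:R^-1 * \sum_(i < n) th (x i).

Definition Lik (R : realType) (f : R -> R) (n : nat) (x : 'I_n -> R) (th : R -> R)
  : \bar R :=
  ((Phat_int x th)%:E - intM f (fun y => expR (th y)) + 1%:E)%E.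

Definition Vtau (R : realType) (tau : R) (y : R) : R := Num.max (y - tau) 0.

Definition addsc (R : realType) (th : R -> R) (t : R) (v : R -> R) : R -> R :=
  fun y => th y + t * v y.

Definition DLlim (R : realType) (f : R -> R) (n : nat) (x : 'I_n -> R)
  (th v : R -> R) (l : \bar R) : Prop :=
  (fun t : R => ((Lik f x (addsc th t v) - Lik f x th) * (t^-1)%:E)%E) @ 0^'+ --> l.

Definition rderiv (R : realType) (phi : R -> R) (y : R) : R :=
  lim ((fun h : R => (phi (y + h) - phi y) / h) @ 0^'+).

Definition gfun (R : realType) (f : R -> R) (n : nat) (x : 'I_n -> R)
  (th : R -> R) (tau t : R) : \bar R :=
  (Lik f x (addsc th t (Vtau tau)) - Lik f x th)%E.

(* real-valued version of g (g is finite near any t >= 0 with g t >= 0) *)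
Definition greal (R : realType) (f : R -> R) (n : nat) (x : 'I_n -> R)
  (th : R -> R) (tau : R) : R -> R :=
  fun t => fine (gfun f x th tau t).

(* Main.v *)
Require Import Defs.
From mathcomp Require Import all_boot all_order all_algebra.
From mathcomp Require Import all_classical all_reals all_analysis.
From mathcomp Require Import lra ring.
From mathcomp Require Import measurable_realfun.
Import Order.TTheory GRing.Theory Num.Theory.
Import numFieldNormedType.Exports.
Set Implicit Arguments. Unset Strict Implicit. Unset Printing Implicit Defensive.
Local Open Scope classical_set_scope.
Local Open Scope ring_scope.
Lemma dexp (R : realType) (A B c x : R) :
  is_derive x 1 (fun u : R => c * expR (A + u * B)) (c * (B * expR (A + x * B))).
Proof.
have h1 : is_derive x 1 (fun u : R => A + u * B) B.
  apply: is_derive_eq. by rewrite scaler0 !add0r mul1r; exact: mulr1.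
have h2 := @is_derive1_comp _ expR (fun u : R => A + u * B) x _ _ (is_derive_expR (A + x * B)) h1.
have := is_deriveZ c h2.
by rewrite /= mulrC.
Qed.

Section Abstract.
Context (R : realType).
Notation mu := (@lebesgue_measure R).
Let D : set R := `[0%R, +oo[%classic.
Let mD : measurable D. Proof. exact: measurable_itv. Qed.

Definition Fk (th v f : R -> R) (k : nat) (u : R) (y : R) : R :=
  ((v y) ^+ k * f y) * expR (th y + u * v y).

Definition Jk (th v f : R -> R) (k : nat) (u : R) : R :=
  Rintegral mu `[0%R, +oo[%classic (Fk th v f k u).

Variables (th v f : R -> R).
Hypothesis mth : measurable_fun D th.
Hypothesis mv : measurable_fun D v.
Hypothesis mf : measurable_fun D f.
Hypothesis v0 : forall y, 0 <= v y.
Hypothesis f0 : forall y, D y -> 0 <= f y.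

Lemma Fk_ge0 k u y : D y -> 0 <= Fk th v f k u y.
Proof.
move=> Dy; rewrite /Fk; apply: mulr_ge0; last exact: expR_ge0.
by apply: mulr_ge0; [exact: exprn_ge0|exact: f0].
Qed.

Lemma Fk_mono k u q y : D y -> u <= q -> Fk th v f k u y <= Fk th v f k q y.
Proof.
move=> Dy uq; rewrite /Fk; apply: ler_wpM2l.
  by apply: mulr_ge0; [exact: exprn_ge0|exact: f0].
rewrite ler_expR lerD2l; exact: ler_wpM2r.
Qed.

Lemma Fk_meas k u : measurable_fun D (Fk th v f k u).
Proof.
apply: measurable_funM; first apply: measurable_funM => //.
  exact: measurable_funX.
apply: (measurableT_comp (f := expR)); first exact: measurable_expR.
apply: measurable_funD => //.
apply: measurable_funM => //; exact: measurable_cst.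
Qed.

Lemma Fk_meas_abs k u : measurable_fun D (fun y => `|Fk th v f k u y|).
Proof. apply: measurableT_comp => //; exact: Fk_meas. Qed.

Lemma Fk_int k u q : u <= q -> mu.-integrable D (EFin \o Fk th v f k q) ->
  mu.-integrable D (EFin \o Fk th v f k u).
Proof.
move=> uq hq; apply: (le_integrable _ _ _ hq) => //.
  apply/measurable_EFinP; exact: Fk_meas.
move=> y Dy /=; rewrite lee_fin !ger0_norm ?Fk_ge0//.
exact: Fk_mono.
Qed.

Lemma Fk_is_derive k (u y : R) :
  is_derive u (1 : R) (fun w : R => Fk th v f k w y) (Fk th v f k.+1 u y).
Proof.
have -> : Fk th v f k.+1 u y = (v y ^+ k * f y) * (v y * expR (th y + u * v y)).
  rewrite /Fk exprS; ring.
exact: (@dexp R (th y) (v y) (v y ^+ k * f y) u).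
Qed.

Lemma d1Fk k x y :
  partial1of2 (fun w y => Fk th v f k w y) x y = Fk th v f k.+1 x y.
Proof. by rewrite partial1of2E; have [_ ->] := Fk_is_derive k x y. Qed.

Lemma Jk_is_derive k u q : u < q ->
  mu.-integrable D (EFin \o Fk th v f k q) ->
  mu.-integrable D (EFin \o Fk th v f k.+1 q) ->
  is_derive u (1 : R) (Jk th v f k) (Jk th v f k.+1 u).
Proof.
move=> uq i0 i1.
have Ia : `](u - 1), q[%classic u by rewrite /= in_itv /= uq andbT ltrBlDr ltrDl.
have intf x : `](u - 1), q[%classic x -> mu.-integrable D (EFin \o Fk th v f k x).
  move=> /=; rewrite in_itv /= => /andP[_ xq]; exact: (Fk_int (ltW xq) i0).
have derf x y : `](u - 1), q[%classic x -> D y ->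
    derivable ((fun w y => Fk th v f k w y)^~ y) x 1.
  by move=> _ _; have [] := Fk_is_derive k x y.
have G0 : forall y, 0 <= `|Fk th v f k.+1 q y| by move=> y.
have iG : mu.-integrable D (EFin \o (fun y => `|Fk th v f k.+1 q y|)).
  apply: (le_integrable _ _ _ i1) => //.
    apply/measurable_EFinP; exact: Fk_meas_abs.
  by move=> y Dy /=; rewrite lee_fin normr_id.
have Gub x y : `](u - 1), q[%classic x -> D y ->
    `|partial1of2 (fun w y => Fk th v f k w y) x y| <= `|Fk th v f k.+1 q y|.
  move=> /=; rewrite in_itv /= => /andP[_ xq] Dy.
  rewrite d1Fk !ger0_norm ?Fk_ge0//; exact: Fk_mono (ltW xq).
apply: DeriveDef.
  have H := (@derivable_under_integral R _ _ mu (fun w y => Fk th v f k w y) D (measurable_itv _) _ _ _ Ia intf derf _ G0 iG Gub). exact: H.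
rewrite -derive1E /Jk.
rewrite (@differentiation_under_integral R _ _ mu (fun w y => Fk th v f k w y) D (measurable_itv _) _ _ _ Ia intf derf _ G0 iG Gub).
by apply: eq_Rintegral => y _; rewrite d1Fk.
Qed.

End Abstract.
Lemma rderiv_ge (R : realType) (phi : R -> R) (y : R) : inTheta phi -> 0 < y ->
  (phi y - phi 0) / y <= rderiv phi y.
Proof.
move=> [_ cvx] y0.
set qf := fun h : R => (phi (y + h) - phi y) / h.
have lb h : 0 < h -> (phi y - phi 0) / y <= qf h.
  move=> h0.
  have yh0 : 0 < y + h by apply: addr_gt0.
  have l0 : 0 <= h / (y + h) by apply: divr_ge0; apply: ltW.
  have l1 : h / (y + h) <= 1 by rewrite ler_pdivrMr // mul1r lerDr ltW.
  have := cvx 0 (y + h) (h / (y + h)) (lexx 0) (ltW yh0) l0 l1.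
  have -> : h / (y + h) * 0 + (1 - h / (y + h)) * (y + h) = y.
    by field; rewrite gt_eqF.
  move=> H.
  have H2 : (y + h) * phi y <= h * phi 0 + y * phi (y + h).
    have -> : h * phi 0 + y * phi (y + h) =
      (y + h) * (h / (y + h) * phi 0 + (1 - h / (y + h)) * phi (y + h)).
      by field; rewrite gt_eqF.
    by rewrite ler_pM2l.
  rewrite /qf ler_pdivrMr // mulrAC ler_pdivlMr //; lra.
have mono : {in Interval (BRight (0:R)) (BLeft (1:R)) &, nondecreasing_fun qf}.
  move=> h1 h2; rewrite !in_itv /= => /andP[h10 _] /andP[h20 _] h12.
  set r := h1 / h2.
  have h2n : h2 != 0 by rewrite gt_eqF.
  have r0 : 0 <= r by apply: divr_ge0; apply: ltW.
  have r1 : r <= 1 by rewrite ler_pdivrMr // mul1r.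
  have := cvx (y + h2) y r (addr_ge0 (ltW y0) (ltW h20)) (ltW y0) r0 r1.
  have -> : r * (y + h2) + (1 - r) * y = y + h1 by rewrite /r; field.
  move=> H.
  rewrite /qf ler_pdivrMr //.
  have -> : (phi (y + h2) - phi y) / h2 * h1 = r * phi (y + h2) + (1 - r) * phi y - phi y.
    by rewrite /r; field.
  lra.
have hlb : has_lbound (qf @` [set` Interval (BRight (0:R)) (BLeft (1:R))]).
  exists ((phi y - phi 0) / y) => z [h]; rewrite /= in_itv /= => /andP[h0 _] <-.
  exact: lb.
have cv := @nondecreasing_at_right_cvgr R qf 0 (BLeft 1) ltr01 mono hlb.
rewrite /rderiv -/qf (cvg_lim _ cv) //.
apply: lb_le_inf.
  exists (qf (1/2)), (1/2) => //; rewrite /= in_itv /=; apply/andP; split.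
    by rewrite divr_gt0.
  by rewrite ltr_pdivrMr // mul1r ltr1n.
move=> z [h]; rewrite /= in_itv /= => /andP[h0 _] <-; exact: lb.
Qed.

Lemma inD (R : realType) (y : R) : `[0%R, +oo[%classic y <-> 0 <= y.
Proof. by rewrite /= in_itv /= andbT. Qed.

Lemma Vtau_ge0 (R : realType) (tau y : R) : 0 <= Vtau tau y.
Proof. by rewrite /Vtau le_max lexx orbT. Qed.

Lemma Vtau_le (R : realType) (tau y : R) : 0 <= tau -> 0 <= y -> Vtau tau y <= y.
Proof. by move=> t0 y0; rewrite /Vtau ge_max y0 andbT lerBlDr lerDl. Qed.

Lemma Vtau_nd (R : realType) (tau : R) : nondecreasing_fun (Vtau tau).
Proof.
move=> a b ab; by rewrite /Vtau ge_max !le_max lerD2r ab lexx !orbT.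
Qed.

Lemma Vtau_cvx (R : realType) (tau a b l : R) : 0 <= l -> l <= 1 ->
  Vtau tau (l * a + (1 - l) * b) <= l * Vtau tau a + (1 - l) * Vtau tau b.
Proof.
move=> l0 l1; have l1' : 0 <= 1 - l by rewrite subr_ge0.
have ha : l * (a - tau) <= l * Vtau tau a by apply: ler_wpM2l => //; rewrite /Vtau le_max lexx.
have hb : (1 - l) * (b - tau) <= (1 - l) * Vtau tau b.
  by apply: ler_wpM2l => //; rewrite /Vtau le_max lexx.
rewrite {1}/Vtau ge_max; apply/andP; split.
  lra.
by apply: addr_ge0; apply: mulr_ge0 => //; exact: Vtau_ge0.
Qed.

Lemma phi_Theta (R : realType) (th : R -> R) (t tau : R) : inTheta th -> 0 <= t ->
  inTheta (addsc th t (Vtau tau)).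
Proof.
move=> [thm thc] t0; split.
  move=> a b a0 ab; rewrite /addsc; apply: lerD; first exact: thm.
  by apply: ler_wpM2l => //; exact: Vtau_nd.
move=> a b l a0 b0 l0 l1; rewrite /addsc.
have h1 := thc a b l a0 b0 l0 l1.
have h2 := ler_wpM2l t0 (Vtau_cvx tau a b l0 l1).
lra.
Qed.

Lemma Phat_addsc (R : realType) (n : nat) (x : 'I_n -> R) (th v : R -> R) (u : R) :
  Phat_int x (addsc th u v) = Phat_int x th + u * Phat_int x v.
Proof.
rewrite /Phat_int /addsc big_split /= -mulr_sumr; ring.
Qed.

Lemma intM_integrable (R : realType) (f h : R -> R) :
  measurable_fun (`[0%R, +oo[%classic : set R) f -> (forall y, `[0%R, +oo[%classic y -> 0 <= f y) ->
  measurable_fun (`[0%R, +oo[%classic : set R) h -> (forall y, `[0%R, +oo[%classic y -> 0 <= h y) ->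
  (intM f h < +oo)%E ->
  (@lebesgue_measure R).-integrable `[0%R, +oo[%classic (EFin \o (fun y => h y * f y)).
Proof.
move=> mf f0 mh h0 fin; apply/integrableP; split.
  by apply/measurable_EFinP; exact: measurable_funM.
apply: le_lt_trans fin; rewrite le_eqVlt; apply/orP; left; apply/eqP.
apply: eq_integral => y; rewrite inE => Dy /=; rewrite ger0_norm //; apply: mulr_ge0; auto.
Qed.

Lemma integrableZl_R (R : realType) (r : R) (g : R -> R) :
  (@lebesgue_measure R).-integrable `[0%R, +oo[%classic (EFin \o g) ->
  (@lebesgue_measure R).-integrable `[0%R, +oo[%classic (EFin \o (fun y => r * g y)).
Proof.
move=> ig.
have -> : (EFin \o (fun y => r * g y)) = (fun y => r%:E * (EFin \o g) y)%E.
  by apply/funext => y /=; rewrite EFinM.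
exact: integrableZl.
Qed.

Theorem mainTheorem6 (R : realType) (f : R -> R) (beta : R) (n : nat) (x : 'I_n -> R)
  (hdens : is_density f) (hA1 : A1 f) (hA2 : A2 f beta) (hA3 : A3 f)
  (hn : (0 < n)%N) (hx0 : forall i, 0 <= x i)
  (hxs : forall i j : 'I_n, (i <= j)%N -> x i <= x j) :
  exists C : R -> R -> R,
  forall (eps Rc sR mR : R), 0 < eps -> 0 <= sR -> mR < beta ->
  (forall phi : R -> R, inTheta phi -> (Rc%:E <= Lik f x phi)%E ->
     `|phi 0| <= sR /\ (forall y, 0 <= y -> rderiv phi y <= mR)) ->
  forall (th : R -> R) (tau : R), inTheta th -> 0 <= tau ->
  (exists l : \bar R, DLlim f x th (Vtau tau) l /\ (eps%:E < l)%E) ->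
  (Rc%:E <= Lik f x th)%E ->
  forall t : R, 0 <= t -> (0 <= gfun f x th tau t)%E ->
    (\forall u \near t, derivable (greal f x th tau) u 1) /\
    derivable (derive1 (greal f x th tau)) t 1 /\
    `|derive1 (derive1 (greal f x th tau)) t| <= C sR mR.
Proof.
pose C := fun sR mR : R => expR sR * fine (intM f (fun y => y ^+ 2 * expR (mR * y))).
exists C => eps Rc sR mR eps0 sR0 mRb Hphi th tau thT tau0 _ HRc t t0 gt0.
have mD : measurable (`[0%R, +oo[%classic : set R) by exact: measurable_itv.
have f0 : forall y, `[0%R, +oo[%classic y -> 0 <= f y.
  by move=> y /inD; exact: hdens.1.
have mf : measurable_fun (`[0%R, +oo[%classic : set R) f.
  exact: (subspace_continuous_measurable_fun mD hA1.1).
have mth : measurable_fun (`[0%R, +oo[%classic : set R) th.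
  have EQ : {in (`[0%R, +oo[%classic : set R), (fun y => th (Num.max y 0)) =1 th}.
    by move=> y; rewrite inE => /inD y0; rewrite max_l.
  have H : measurable_fun (`[0%R, +oo[%classic : set R) (fun y => th (Num.max y 0)).
    apply: nondecreasing_measurable => // a b ab; apply: thT.1.
      by rewrite le_max lexx orbT.
    by rewrite ge_max !le_max ab lexx !orbT.
  exact: (eq_measurable_fun _ EQ H).
have mV : measurable_fun (`[0%R, +oo[%classic : set R) (Vtau tau).
  exact: (nondecreasing_measurable mD (@Vtau_nd R tau)).
have V0 := @Vtau_ge0 R tau.
have I0 : (0 <= intM f (fun y => expR (th y)))%E.
  apply: integral_ge0 => y Dy; rewrite lee_fin; apply: mulr_ge0; [exact: expR_ge0|exact: f0].
have [Lth HLth] : exists Lth : R, Lik f x th = Lth%:E.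
  move: HRc I0; rewrite /Lik; case: (intM f _) => [r| |] //= _ _.
  by exists (Phat_int x th - r + 1).
have HLphi : (Rc%:E <= Lik f x (addsc th t (Vtau tau)))%E.
  move: gt0; rewrite /gfun HLth sube_ge0 //; apply: le_trans; by rewrite -HLth.
have phiT := phi_Theta tau thT t0.
have [phi0 phid] := Hphi _ phiT HLphi.
have phib : forall y, 0 <= y -> addsc th t (Vtau tau) y <= sR + mR * y.
  move=> y y0; have [->|yn0] := eqVneq y 0.
    by rewrite mulr0 addr0; exact: le_trans (ler_norm _) phi0.
  have ypos : 0 < y by rewrite lt_def yn0 y0.
  have := rderiv_ge phiT ypos; rewrite ler_pdivrMr // => H.
  have H2 := ler_wpM2r (ltW ypos) (phid y y0).
  have H3 := ler_norm (addsc th t (Vtau tau) 0).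
  lra.
pose dl := (beta - mR) / 2.
have dl0 : 0 < dl by rewrite /dl divr_gt0 // subr_gt0.
pose q := t + dl.
have tq : t < q by rewrite /q ltrDl.
pose lam := mR + dl.
have lamb : lam < beta by rewrite /lam /dl; lra.
have mE : forall c : R, measurable_fun (`[0%R, +oo[%classic : set R) (fun y => expR (c * y)).
  move=> c; apply: (measurableT_comp (f := expR)); first exact: measurable_expR.
  apply: measurable_funM => //; try exact: measurable_cst; try exact: measurable_id.
have mE2 : forall c : R, measurable_fun (`[0%R, +oo[%classic : set R) (fun y => y ^+ 2 * expR (c * y)).
  move=> c; apply: measurable_funM => //; try exact: mE.
  all: try by apply: measurable_funX; exact: measurable_id.
have iE : forall c, c < beta -> (@lebesgue_measure R).-integrable (`[0%R, +oo[%classic : set R)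
    (EFin \o (fun y => expR (c * y) * f y)).
  move=> c cb; apply: intM_integrable => //; try by move=> y _; exact: expR_ge0.
  exact: (hA2.1 c).2.
have iE2 : forall c, c < beta -> (@lebesgue_measure R).-integrable (`[0%R, +oo[%classic : set R)
    (EFin \o (fun y => (y ^+ 2 * expR (c * y)) * f y)).
  move=> c cb; apply: intM_integrable => //;
    try by move=> y _; apply: mulr_ge0; [exact: sqr_ge0|exact: expR_ge0].
  exact/hA3/((hA2.1 c).2).
have iFq : forall j, (j <= 2)%N -> (@lebesgue_measure R).-integrable (`[0%R, +oo[%classic : set R)
    (EFin \o Fk th (Vtau tau) f j q).
  move=> j hj.
  pose g := fun y => expR sR * (expR (lam * y) * f y + (y ^+ 2 * expR (lam * y)) * f y).
  have ig : (@lebesgue_measure R).-integrable (`[0%R, +oo[%classic : set R) (EFin \o g).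
    apply: integrableZl_R.
    pose A := fun y : R => expR (lam * y) * f y.
    pose B := fun y : R => (y ^+ 2 * expR (lam * y)) * f y.
    have -> : (EFin \o (fun y => expR (lam * y) * f y + (y ^+ 2 * expR (lam * y)) * f y)) =
      ((EFin \o A) \+ (EFin \o B))%E.
      by apply/funext => y /=; rewrite EFinD.
    by apply: integrableD => //; [exact: iE | exact: iE2].
  apply: (le_integrable _ _ _ ig) => //.
    by apply/measurable_EFinP; exact: Fk_meas.
  move=> y Dy /=; rewrite lee_fin.
  have y0 : 0 <= y by apply/inD.
  have fy0 := f0 y Dy.
  have hv := Vtau_le tau0 y0.
  have hv0 := V0 y.
  have g0 : 0 <= g y.
    rewrite /g; apply: mulr_ge0; first exact: expR_ge0.
    apply: addr_ge0; apply: mulr_ge0 => //; try exact: expR_ge0.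
    by apply: mulr_ge0; [exact: sqr_ge0|exact: expR_ge0].
  rewrite !ger0_norm //; last exact: Fk_ge0.
  have e1 : th y + q * Vtau tau y <= sR + lam * y.
    have := phib y y0; rewrite /addsc /q /lam => H.
    have := ler_wpM2l (ltW dl0) hv => H2.
    lra.
  have e2 : Vtau tau y ^+ j <= 1 + y ^+ 2.
    case: j hj => [|[|[|j]]] // _.
    - by rewrite expr0 lerDl sqr_ge0.
    - rewrite expr1 expr2; nra.
    - rewrite !expr2; nra.
  have -> : g y = ((1 + y ^+ 2) * f y) * (expR sR * expR (lam * y)) by rewrite /g; ring.
  rewrite /Fk; apply: ler_pM.
  - by apply: mulr_ge0 => //; exact: exprn_ge0.
  - exact: expR_ge0.
  - exact: ler_wpM2r.
  - by rewrite -expRD ler_expR.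
have intF : forall j u, (j <= 2)%N -> u <= q -> (@lebesgue_measure R).-integrable
    (`[0%R, +oo[%classic : set R) (EFin \o Fk th (Vtau tau) f j u).
  by move=> j u hj uq; exact: (Fk_int mth mV mf V0 f0 uq (iFq j hj)).
have q0 : 0 <= q by rewrite /q; apply: addr_ge0 => //; exact: ltW.
have eI : forall u, u <= q ->
    intM f (fun y => expR (addsc th u (Vtau tau) y)) = (Jk th (Vtau tau) f 0 u)%:E.
  move=> u uq.
  transitivity (\int[@lebesgue_measure R]_(y in (`[0%R, +oo[%classic : set R))
     ((Fk th (Vtau tau) f 0 u y)%:E))%E.
    by apply: eq_integral => y _; rewrite /Fk /addsc expr0 mul1r mulrC.
  rewrite /Jk /Rintegral fineK //.
  exact: (@integrable_fin_num _ _ _ (@lebesgue_measure R) _ (measurable_itv _) _ (intF 0%N u isT uq)).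
have e0 : intM f (fun y => expR (th y)) = (Jk th (Vtau tau) f 0 0)%:E.
  rewrite -eI //; congr intM; apply/funext => y; by rewrite /addsc mul0r addr0.
pose P := Phat_int x th.
pose cc := Phat_int x (Vtau tau).
pose K := P + 1 - (P - Jk th (Vtau tau) f 0 0 + 1).
pose Gf := fun u => u * cc - Jk th (Vtau tau) f 0 u + K.
have eG : forall u, u < q -> greal f x th tau u = Gf u.
  move=> u uq; rewrite /greal /gfun /Lik (eI u (ltW uq)) e0 Phat_addsc.
  rewrite -!EFinB /= /Gf /K /P /cc; ring.
have dJ : forall k u, (k <= 1)%N -> u < q ->
    is_derive u (1 : R) (Jk th (Vtau tau) f k) (Jk th (Vtau tau) f k.+1 u).
  move=> k u hk uq; apply: (Jk_is_derive mth mV mf V0 f0 uq).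
    by apply: iFq; apply: leq_trans hk _.
  exact: iFq.
have dG : forall u, u < q -> is_derive u (1 : R) Gf (cc - Jk th (Vtau tau) f 1 u).
  move=> u uq; have h := dJ 0%N u isT uq.
  rewrite /Gf; apply: is_derive_eq.
  by rewrite scaler0 add0r addr0; congr (_ - _); exact: mulr1.
have eGnear : forall u, u < q -> \forall w \near u, Gf w = greal f x th tau w.
  by move=> u uq; move: (lt_nbhsl uq); apply: filterS => w wq; rewrite eG.
have d1 : forall u, u < q -> derive1 (greal f x th tau) u = cc - Jk th (Vtau tau) f 1 u.
  move=> u uq; rewrite derive1E -(near_eq_derive (1 : R) (eGnear u uq)).
  by have [_ ->] := dG u uq.
pose Hf := fun u => cc - Jk th (Vtau tau) f 1 u.
have dH : is_derive t (1 : R) Hf (- Jk th (Vtau tau) f 2 t).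
  have h := dJ 1%N t isT tq.
  rewrite /Hf; apply: is_derive_eq.
  by rewrite add0r mul1r.
have eHnear : \forall w \near t, Hf w = derive1 (greal f x th tau) w.
  by move: (lt_nbhsl tq); apply: filterS => w wq; rewrite d1.
split.
  move: (lt_nbhsl tq); apply: filterS => u uq.
  apply: (near_eq_derivable (eGnear u uq)).
  by have [] := dG u uq.
split.
  apply: (near_eq_derivable eHnear).
  by have [] := dH.
rewrite derive1E -(near_eq_derive (1 : R) eHnear).
have [_ ->] := dH.
rewrite normrN ger0_norm; last by apply: Rintegral_ge0 => y Dy; exact: Fk_ge0.
have i2 := iE2 mR mRb.
rewrite /C.
change (fine (intM f (fun y => y ^+ 2 * expR (mR * y)))) with
  (Rintegral (@lebesgue_measure R) (`[0%R, +oo[%classic : set R)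
     (fun y => (y ^+ 2 * expR (mR * y)) * f y)).
rewrite -RintegralZl //.
apply: le_Rintegral => //.
- exact: (intF 2%N t isT (ltW tq)).
- exact: integrableZl_R.
move=> y Dy.
have y0 : 0 <= y by apply/inD.
have fy0 := f0 y Dy.
have hv := Vtau_le tau0 y0.
have hv0 := V0 y.
have -> : expR sR * (y ^+ 2 * expR (mR * y) * f y) =
  (y ^+ 2 * f y) * (expR sR * expR (mR * y)) by ring.
rewrite /Fk; apply: ler_pM.
- by apply: mulr_ge0 => //; exact: exprn_ge0.
- exact: expR_ge0.
- apply: ler_wpM2r => //; rewrite !expr2; nra.
- by rewrite -expRD ler_expR; exact: phib.
Qed.
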